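(* Let $\mathcal{X}$ be a measurable space, $K\ge1$, and let classifiers be measurable maps $\mathcal{X}\to[K]$. Let $\mathcal{B}$ assign to each $x$ a set $\mathcal{B}(x)\subseteq\mathcal{X}$ and let $\mathcal{N}(V)=\{x:\exists x'\in V,\ \mathcal{B}(x)\cap\mathcal{B}(x')\neq\emptyset\}$. Let $Q$ be a probability measure on $\mathcal{X}$ satisfying the $c$-expansion property for a non-increasing $c:[0,1]\to(0,\infty)$, i.e. $Q(\mathcal{N}(S))\ge c(Q(S))Q(S)$ for every measurable $S$. Let $F,H,G_{pl}$ be classifiers, $\gamma_H=c(Q(\{x:G_{pl}(x)\neq H(x)\}))$, and assume $\gamma_H>1$. Let $\mathcal{S}_{\mathcal{B}}(F)=\{x:F(x)=F(x')\ \forall x'\in\mathcal{B}(x)\}$ (similarly for $H$), with complements $\mathcal{S}_{\mathcal{B}}^c(\cdot)$; let $\mathcal{M}(F)=\{x:F(x)\neq H(x)\}$, $\mathcal{M}(G_{pl})=\{x:G_{pl}(x)\neq H(x)\}$, $\mathcal{M}_{pl}(F)=\{x:F(x)\neq G_{pl}(x)\}$. Define $$q=\frac{Q\big(\mathcal{M}_{pl}(F)\cup\mathcal{S}_{\mathcal{B}}^c(F)\cup\mathcal{S}_{\mathcal{B}}^c(H)\big)}{\gamma_H-1}.$$ Then $Q\big(\mathcal{S}_{\mathcal{B}}(F)\cap\mathcal{S}_{\mathcal{B}}(H)\cap\mathcal{M}(G_{pl})\cap\mathcal{M}(F)\big)\le q$. In particular, with $\mathcal{N}_1=\{x\in\mathcal{S}_{\mathcal{B}}(F)\cap\mathcal{S}_{\mathcal{B}}(H):F(x)=G_{pl}(x),\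 G_{pl}(x)\neq H(x)\}$ and $\mathcal{N}_2=\{x\in\mathcal{S}_{\mathcal{B}}(F)\cap\mathcal{S}_{\mathcal{B}}(H):F(x)\neq G_{pl}(x),\ G_{pl}(x)\neq H(x),\ F(x)\neq H(x)\}$, we have $Q(\mathcal{N}_1\cup\mathcal{N}_2)\le q$.
   Context: All sets are assumed measurable. *)

(* Defs.v *)
From HB Require Import structures.
From mathcomp Require Import all_boot all_order all_algebra.
From mathcomp Require Import all_classical all_reals all_analysis.
Set Implicit Arguments. Unset Strict Implicit. Unset Printing Implicit Defensive.
Import Order.TTheory GRing.Theory Num.Theory.
Local Open Scope classical_set_scope.
Local Open Scope ring_scope.

(* A classifier X -> [K] is measurable (w.r.t. the discrete sigma-algebra on
   the finite label set 'I_K) iff every label class is measurable. *)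
Definition measurable_classifier (d : measure_display) (X : measurableType d)
  (K : nat) (F : X -> 'I_K) : Prop :=
  forall k : 'I_K, measurable (F @^-1` [set k]).

Definition nbhd_set (X : Type) (B : X -> set X) (V : set X) : set X :=
  [set x | exists x', V x' /\ (B x `&` B x' !=set0)].

Definition robust_set (X : Type) (K : nat) (B : X -> set X) (F : X -> 'I_K)
  : set X := [set x | forall x', B x x' -> F x = F x'].

(* Main.v *)
Require Import Defs.
From HB Require Import structures.
From mathcomp Require Import all_boot all_order all_algebra.
From mathcomp Require Import all_classical all_reals all_analysis.
Import Order.TTheory GRing.Theory Num.Theory.
Local Open Scope classical_set_scope.
Local Open Scope ring_scope.

Theorem mainTheorem3 (d : measure_display) (X : measurableType d)
  (R : realType) (K : nat) (K_ge1 : (1 <= K)%N)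
  (B : X -> set X) (Q : probability X R) (c : R -> R)
  (c_pos : forall t, 0 <= t <= 1 -> 0 < c t)
  (c_noninc : forall s t, 0 <= s -> s <= t -> t <= 1 -> c t <= c s)
  (N_meas : forall S : set X, measurable S -> measurable (nbhd_set B S))
  (c_expansion : forall S : set X, measurable S ->
     ((c (fine (Q S)))%:E * Q S <= Q (nbhd_set B S))%E)
  (F H G : X -> 'I_K)
  (F_meas : measurable_classifier F) (H_meas : measurable_classifier H)
  (G_meas : measurable_classifier G)
  (SF_meas : measurable (robust_set B F))
  (SH_meas : measurable (robust_set B H))
  (gammaH_gt1 : 1 < c (fine (Q [set x | G x <> H x]))) :
  let gammaH := c (fine (Q [set x | G x <> H x])) in
  let SF := robust_set B F in
  let SH := robust_set B H in
  let q := (fine (Q ([set x | F x <> G x] `|` ~` SF `|` ~` SH)) / (gammaH - 1))%:E in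
  (Q (SF `&` SH `&` [set x | G x <> H x] `&` [set x | F x <> H x]) <= q)%E /\
  (let N1 := [set x | SF x /\ SH x /\ F x = G x /\ G x <> H x] in
   let N2 := [set x | SF x /\ SH x /\ F x <> G x /\ G x <> H x /\ F x <> H x] in
   Q (N1 `|` N2) <= q)%E.
Proof.
Proof.
move=> gammaH SF SH q.
have meq : forall F1 F2 : X -> 'I_K, measurable_classifier F1 -> measurable_classifier F2 ->
    measurable [set x | F1 x <> F2 x].
  move=> F1 F2 m1 m2.
  have -> : [set x | F1 x <> F2 x] = ~` \bigcup_(k in [set: 'I_K]) (F1 @^-1` [set k] `&` F2 @^-1` [set k]).
    apply/seteqP; split => x /=.
      by move=> ne [k _ [/= e1 e2]]; apply: ne; rewrite e1 e2.
    by move=> nb e; apply: nb; exists (F1 x) => //; split => //=.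
  apply: measurableC; apply: fin_bigcup_measurable; first exact: finite_finset.
  by move=> k _; apply: measurableI.
have mMG := meq G H G_meas H_meas.
have mMF := meq F H F_meas H_meas.
have mFG := meq F G F_meas G_meas.
set A := SF `&` SH `&` [set x | G x <> H x] `&` [set x | F x <> H x].
set U := [set x | F x <> G x] `|` ~` SF `|` ~` SH.
have mA : measurable A by do 3 apply: measurableI => //.
have mU : measurable U by apply: measurableU; [apply: measurableU|]; rewrite //; apply: measurableC.
have sub : nbhd_set B A `<=` A `|` U.
  move=> y [x [[[[Fx Hx] GH] FH] [z [Byz Bxz]]]].
  have [SFy|nSFy] := pselect (SF y); last by right; left; right.
  have [SHy|nSHy] := pselect (SH y); last by right; right.
  have eF : F y = F x by rewrite (SFy z Byz) (Fx z Bxz).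
  have eH : H y = H x by rewrite (SHy z Byz) (Hx z Bxz).
  have [eFG|nFG] := eqVneq (F y) (G y); last by right; left; left; apply/eqP.
  left; split; [split; [split|] |] => //=.
    by rewrite -eFG eF eH.
  by rewrite eF eH.
have AN : A = [set x | SF x /\ SH x /\ F x = G x /\ G x <> H x] `|`
              [set x | SF x /\ SH x /\ F x <> G x /\ G x <> H x /\ F x <> H x].
  apply/seteqP; split => x /=.
    move=> [[[a b] e] f]; have [eFG|nFG] := eqVneq (F x) (G x).
      by left.
    by right; split; [|split; [|split; [apply/eqP|]]].
  case=> [[a [b [e f]]]|[a [b [e [f g]]]]]; (split; [split; [split|]|]) => //.
  by move=> /= h; apply: f; rewrite -e.
have main : (Q A <= q)%E.
  have QA : (fine (Q (A)))%:E = Q (A) by apply: fineK; apply: fin_num_measure.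
  have QU : (fine (Q (U)))%:E = Q (U) by apply: fineK; apply: fin_num_measure.
  have QM : (fine (Q ([set x | G x <> H x])))%:E = Q ([set x | G x <> H x]) by apply: fineK; apply: fin_num_measure.
  set a := fine (Q A) in QA *.
  set u := fine (Q U) in QU *.
  set m := fine (Q [set x | G x <> H x]) in QM *.
  have a0 : 0 <= a by rewrite -lee_fin QA measure_ge0.
  have am : a <= m.
    rewrite -lee_fin QA QM; apply: le_measure; rewrite ?inE //.
    by move=> x [[_ ?] _].
  have m1 : m <= 1 by rewrite -lee_fin QM; apply: probability_le1.
  have ca : gammaH <= c a by apply: (c_noninc a m).
  have exp : c a * a <= a + u.
    rewrite -lee_fin EFinM EFinD QA QU.
    apply: le_trans (c_expansion _ mA) _.
    apply: le_trans (measureU2 Q mA mU).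
    apply: le_measure; rewrite ?inE //.
    - exact: N_meas.
    - exact: measurableU.
  rewrite /q -QA lee_fin ler_pdivlMr ?subr_gt0 //.
  rewrite mulrBr mulr1 lerBlDl.
  apply: le_trans exp.
  by rewrite mulrC ler_wpM2r.
split => //.
by move=> N1 N2; rewrite /N1 /N2 -AN.
Qed.
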